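(* Let $\Gamma$ be a matching market and $\widehat\Gamma$ its induced continuum market. If $M$ is a stable integral matching in $\widehat\Gamma$, then the map $\mu$ defined by $\mu(w)=f$ and $w\in\mu(f)$ whenever $M_f(w)=1$ (for $w\in W$, $f\in\widetilde F$) is a stable matching in $\Gamma$.
   Context: Matching market $\Gamma$: finite firms $F$, finite workers $W=\{w_1,\dots,w_n\}$, null firm $\o$, $\widetilde F=F\cup\{\o\}$; each worker $w$ has a strict complete transitive preference $\succ_w$ over $\widetilde F$ ($f\succeq_w f'$ means $f\succ_w f'$ or $f=f'$); each firm $f\in F$ has a strict complete transitive preference $\succ_f$ over $2^W$; $Ch_f(S)$ is the $\succ_f$-best subset of $S$. A matching $\mu$ in $\Gamma$ assigns $\mu(w)\in\widetilde F$ and $\mu(f)\subseteq W$ with $\mu(w)=f\iff w\in\mu(f)$; it is stable if $\mu(w)\succeq_w\o$ for all $w$, $\mu(f)=Ch_f(\mu(f))$ for all $f\in F$, and there is no $f\in F$, $S\subseteq W$ with $f\succeq_w\mu(w)$ for all $w\in S$ and $S\succ_f\mu(f)$. Induced continuum market $\widehat\Gamma$: for each $f\in F$, list the sets $S\succ_f\emptyset$ as indicator vectors $\mathbf u^1\succ_f\cdots\succ_f\mathbf u^L$; for $\mathbf x\in[0,1]^W$ set $t_0=0$, $\mathbf z^0=\mathbf x$, $t_k=\min\{1-\sum_{j<k}t_j,\ z^{k-1}_i: u^k_i\ne0\}$, $\mathbf z^k=\mathbf z^{k-1}-t_k\mathbf u^k$ ($k=1,\dots,L$), and $\widehat{Ch}_f(\mathbf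 x)=\sum_k t_k\mathbf u^k$; also $\widehat{Ch}_{\o}(\mathbf x)=\mathbf x$. A matching in $\widehat\Gamma$ is $M=(M_f)_{f\in\widetilde F}$ with $M_f\in[0,1]^W$ and $\sum_{f\in\widetilde F}M_f(w)=1$ for all $w$; it is integral if all $M_f(w)\in\{0,1\}$. For $\mathbf x,\mathbf x'$, $\mathbf x\vee\mathbf x'$ is the componentwise maximum. Write $M'_f\succeq_f M_f$ if $M'_f=\widehat{Ch}_f(M'_f\vee M_f)$, and $M'_f\succ_f M_f$ if moreover $M'_f\ne M_f$. Let $A^{\preceq f}(M)(w)=\sum_{f'\in\widetilde F: f\succeq_w f'}M_{f'}(w)$. $M$ is stable if (i) $M_f=\widehat{Ch}_f(M_f)$ for every $f\in F$, and for all $w\in W$, $M_f(w)=0$ for every $f$ with $\o\succ_w f$; and (ii) there are no $f\in F$ and $M'_f\in[0,1]^W$ with $M'_f\succ_f M_f$ and $M'_f\le A^{\preceq f}(M)$. *)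

(* Defs.v *)
From HB Require Import structures.
From mathcomp Require Import all_boot all_order all_algebra.
From mathcomp Require Import reals.
Set Implicit Arguments. Unset Strict Implicit. Unset Printing Implicit Defensive.
Import Order.TTheory GRing.Theory Num.Theory.
Local Open Scope ring_scope.

(* A strict complete transitive preference on a finite type, as a boolean
   relation: [r x y] means "x is strictly preferred to y". *)
Definition strict_pref (T : eqType) (r : rel T) : Prop :=
  irreflexive r /\ transitive r /\ (forall x y, x != y -> r x y || r y x).

Section Market.
Variables (F W : finType).
(* Firms are [Some f]; the null firm is [None], so the extended set of
   firms  F~ = F ∪ {null}  is [option F]. *)
Variable pw : W -> rel (option F).
Variable pf : F -> rel {set W}.

Definition wpref (w : W) (a b : option F) : bool := pw w a b || (a == b).

Definition ch (f : F) (S : {set W}) : {set W} :=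
  odflt S [pick T : {set W} | (T \subset S) &&
            [forall T' : {set W}, ((T' \subset S) && (T' != T)) ==> pf f T T']].

Definition mu_of (mu : W -> option F) (f : F) : {set W} :=
  [set w | mu w == Some f].

Definition stable_discrete (mu : W -> option F) : Prop :=
  [/\ (forall w, wpref w (mu w) None),
      (forall f : F, mu_of mu f = ch f (mu_of mu f)) &
      ~ (exists (f : F) (S : {set W}),
            (forall w, w \in S -> wpref w (Some f) (mu w)) /\
            pf f S (mu_of mu f))].

Variable R : realType.

(* the sets S ≻_f ∅, listed as u^1 ≻_f u^2 ≻_f ... ≻_f u^L *)
Definition accept (f : F) : seq {set W} :=
  sort (fun S T : {set W} => (S == T) || pf f S T)
       [seq S <- enum [set: {set W}] | pf f S set0].

Definition ind (S : {set W}) : {ffun W -> R} := [ffun i => (i \in S)%:R].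

(* one step of the greedy procedure: state (z^{k-1}, 1 - Σ_{j<k} t_j, Σ_{j<k} t_j u^j);
   t_k = min{ 1 - Σ_{j<k} t_j, z^{k-1}_i : u^k_i ≠ 0 } *)
Definition chc_step (st : {ffun W -> R} * R * {ffun W -> R}) (S : {set W})
  : {ffun W -> R} * R * {ffun W -> R} :=
  let: (z, cap, out) := st in
  let t := \big[Num.min/cap]_(i in S) z i in
  ([ffun i => z i - t * ind S i], cap - t, [ffun i => out i + t * ind S i]).

Definition chc (f : F) (x : {ffun W -> R}) : {ffun W -> R} :=
  (foldl chc_step (x, 1, [ffun=> 0]) (accept f)).2.

Definition vmax (x y : {ffun W -> R}) : {ffun W -> R} :=
  [ffun i => Num.max (x i) (y i)].

Definition cwpref (f : F) (M' M : {ffun W -> R}) : Prop := M' = chc f (vmax M' M).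
Definition cspref (f : F) (M' M : {ffun W -> R}) : Prop := cwpref f M' M /\ M' <> M.

Definition cmatching (M : option F -> {ffun W -> R}) : Prop :=
  (forall a w, 0 <= M a w <= 1) /\
  (forall w, \sum_(a : option F) M a w = 1).

Definition integral (M : option F -> {ffun W -> R}) : Prop :=
  forall a w, M a w = 0 \/ M a w = 1.

Definition Abelow (M : option F -> {ffun W -> R}) (f : option F) : {ffun W -> R} :=
  [ffun w => \sum_(a : option F | wpref w f a) M a w].

Definition stable_cont (M : option F -> {ffun W -> R}) : Prop :=
  [/\ (forall f : F, M (Some f) = chc f (M (Some f))),
      (forall w (a : option F), pw w None a -> M a w = 0) &
      ~ (exists (f : F) (M' : {ffun W -> R}),
            (forall w, 0 <= M' w <= 1) /\
            cspref f M' (M (Some f)) /\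
            (forall w, M' w <= Abelow M (Some f) w))].

End Market.

(* Main.v *)
Require Import Defs.
From HB Require Import structures.
From mathcomp Require Import all_boot all_order all_algebra.
From mathcomp Require Import reals lra.
Import Order.TTheory GRing.Theory Num.Theory.
Local Open Scope ring_scope.

Lemma step_t0 (W : finType) (R : realType) (z out : {ffun W -> R}) (cap : R) (S : {set W}) :
  \big[Num.min/cap]_(i in S) z i = 0 -> chc_step (z, cap, out) S = (z, cap, out).
Proof.
move=> H; rewrite /chc_step H subr0; congr (_, _, _); apply/ffunP => i;
by rewrite ffunE mul0r ?subr0 ?addr0.
Qed.

Lemma fold_const (W : finType) (R : realType) (L : seq {set W}) (z out : {ffun W -> R}) :
  (forall i, 0 <= z i) -> foldl (@chc_step W R) (z, 0, out) L = (z, 0, out).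
Proof.
move=> hz; elim: L => // S L IH.
rewrite -[foldl _ _ (S :: L)]/(foldl (@chc_step W R) (chc_step (z,0,out) S) L) step_t0 ?IH //.
apply/eqP; rewrite eq_le; apply/andP; split.
  exact: bigmin_le_id.
by apply: (big_ind (fun x => 0 <= x)) => // a b ha hb; rewrite le_min ha hb.
Qed.

Lemma fold_ind (W : finType) (R : realType) (e : rel {set W}) (te : transitive e) (re : reflexive e)
  (L : seq {set W}) (X : {set W}) :
  sorted e L -> (forall S, S \in L -> S != set0) ->
  exists T0, (foldl (@chc_step W R) (ind R X, 1, [ffun=> 0]) L).2 = ind R T0 /\
    ((T0 = set0 /\ forall S, S \in L -> ~~ (S \subset X)) \/
     (T0 \in L /\ T0 \subset X /\ forall S, S \in L -> S \subset X -> e T0 S)).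
Proof.
elim: L => [|S L IH] hs hne.
  exists set0; split; last by left.
  by apply/ffunP => i; rewrite !ffunE in_set0.
rewrite -[foldl _ _ (S :: L)]/(foldl (@chc_step W R) (chc_step (ind R X, 1, [ffun=> 0]) S) L).
have hsL : sorted e L by apply: path_sorted hs.
have hneL : forall S, S \in L -> S != set0 by move=> T hT; apply: hne; rewrite inE hT orbT.
have hS0 : S != set0 by apply: hne; rewrite inE eqxx.
have [sub|nsub] := boolP (S \subset X).
  have ht : \big[Num.min/(1:R)]_(i in S) (ind R X) i = 1.
    apply: (big_ind (fun x => x = 1)) => // [a b -> ->|i hi].
      by rewrite minxx.
    by rewrite ffunE (subsetP sub i hi).
  rewrite /chc_step ht subrr fold_const /=; last first.
    move=> i; rewrite !ffunE mul1r subr_ge0.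
    by case hi: (i \in S); [rewrite (subsetP sub i hi) | case: (i \in X)].
  exists S; split.
    by apply/ffunP => i; rewrite !ffunE mul1r add0r.
  right; split; first by rewrite inE eqxx.
  split=> // T; rewrite inE => /orP [/eqP -> _|hT _].
    by [].

  by have := order_path_min te hs => /allP; apply.
have [j hjS hjX] : exists2 j, j \in S & j \notin X.
  by move/subsetPn: nsub => [j hj1 hj2]; exists j.
have ht : \big[Num.min/(1:R)]_(i in S) (ind R X) i = 0.
  apply/eqP; rewrite eq_le; apply/andP; split.
    by apply: le_trans (bigmin_le_cond _ _ hjS) _; rewrite ffunE (negbTE hjX).
  by apply: (big_ind (fun x => 0 <= x)) => // [a b ha hb|i _]; rewrite ?le_min ?ha ?hb // ffunE ler0n.
rewrite step_t0 //.
have [T0 [h1 h2]] := IH hsL hneL.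
exists T0; split=> //.
case: h2 => [[-> h]|[hT [hsub h]]].
  left; split=> // T; rewrite inE => /orP [/eqP ->|]; [by [] | exact: h].
right; split; first by rewrite inE hT orbT.
split=> // T; rewrite inE => /orP [/eqP ->|hT']; first by rewrite (negbTE nsub).
exact: h.
Qed.

Lemma ch_uniq (F W : finType) (pf : F -> rel {set W}) (f : F)
  (hpf : strict_pref (pf f)) (X T0 : {set W}) :
  T0 \subset X -> (forall T' : {set W}, T' \subset X -> T' != T0 -> pf f T0 T') -> ch pf f X = T0.
Proof.
case: hpf => irr [tr tot] hsub hbest.
rewrite /ch; case: pickP => [T /andP [hT /forallP hall]|hnone] /=.
  apply/eqP; apply/negPn/negP => hne.
  have h1 := hbest T hT hne.
  have := hall T0; rewrite hsub eq_sym hne /= => h2.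
  by have := tr _ _ _ h1 h2; rewrite irr.
have := hnone T0; rewrite hsub /=.
move/negbT/forallPn => [T' ]; rewrite negb_imply => /andP [/andP [h1 h2]].
by rewrite hbest.
Qed.

Lemma ch_spec (F W : finType) (pf : F -> rel {set W}) (f : F)
  (hpf : strict_pref (pf f)) (R : realType) (X : {set W}) :
  chc pf f (ind R X) = ind R (ch pf f X) /\ ch pf f X \subset X /\
  forall T' : {set W}, T' \subset X -> T' != ch pf f X -> pf f (ch pf f X) T'.
Proof.
have hpf' := hpf.
case: hpf' => irr [tr tot].
pose e := fun S T : {set W} => (S == T) || pf f S T.
have te : transitive e.
  move=> y x z; rewrite /e /= => /orP [/eqP ->|h1] // /orP [/eqP <-|h2].
    by rewrite h1 orbT.
  by rewrite (tr _ _ _ h1 h2) orbT.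
have re : reflexive e by move=> x; rewrite /e /= eqxx.
have tote : total e.
  move=> x y; rewrite /e /=; case: (eqVneq x y) => [->|hne] //=.
  by have := tot _ _ hne; case/orP => ->; rewrite ?orbT.
have hs : sorted e (accept pf f) by apply: sort_sorted.
have hmem : forall S : {set W}, S \in accept pf f -> pf f S set0.
  by move=> S; rewrite /accept mem_sort mem_filter => /andP [].
have hne : forall S : {set W}, S \in accept pf f -> S != set0.
  by move=> S /hmem h; apply/eqP => E; rewrite E irr in h.
have [T0 [hfold hT0]] := @fold_ind W R e te re _ X hs hne.
have hP : T0 \subset X /\ forall T' : {set W}, T' \subset X -> T' != T0 -> pf f T0 T'.
  case: hT0 => [[-> hnot]|[hin [hsub hbest]]].
    split; first exact: sub0set.
    move=> T' hT' hne'; have := tot _ _ hne'; case/orP => // h.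
    have : T' \in accept pf f by rewrite /accept mem_sort mem_filter h mem_enum inE.
    by move/hnot; rewrite hT'.
  split=> // T' hT' hne'.
  case: (eqVneq T' set0) => [->|hT'0]; first exact: hmem.
  have := tot _ _ hT'0; case/orP => h.
    have : T' \in accept pf f by rewrite /accept mem_sort mem_filter h mem_enum inE.
    move=> hin'; have := hbest _ hin' hT'; rewrite /e eq_sym (negbTE hne') //.
  exact: tr (hmem _ hin) h.
have hch := @ch_uniq F W pf f hpf X T0 hP.1 hP.2.
by rewrite hch; split=> //; exact: hfold.
Qed.

Lemma ind_inj (W : finType) (R : realType) (A B : {set W}) : ind R A = ind R B -> A = B.
Proof.
move=> h; apply/setP => i; have := congr1 (fun g : {ffun W -> R} => g i) h; rewrite !ffunE.
by case: (i \in A); case: (i \in B) => //= /eqP; rewrite ?oner_eq0 // eq_sym oner_eq0.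
Qed.

Lemma vmax_ind (W : finType) (R : realType) (A B : {set W}) :
  vmax (ind R A) (ind R B) = ind R (A :|: B).
Proof.
apply/ffunP => i; rewrite !ffunE inE.
by case: (i \in A); case: (i \in B); rewrite /= ?maxxx /Num.max ?ltr01 ?ltxx /= ?ltr10.
Qed.

Theorem lemma2 (F W : finType) (pw : W -> rel (option F)) (pf : F -> rel {set W})
  (hpw : forall w, strict_pref (pw w)) (hpf : forall f, strict_pref (pf f))
  (R : realType) (M : option F -> {ffun W -> R}) :
  cmatching M -> integral M -> stable_cont pw pf M ->
  exists mu : W -> option F,
    (forall (w : W) (a : option F), mu w = a <-> M a w = 1) /\
    stable_discrete pw pf mu.
Proof.
move=> [hrng hsum] hint [hfix hnull hnob].
have sum_ge : forall w (P : pred (option F)) b, P b -> M b w <= \sum_(a | P a) M a w.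
  move=> w P b hb; rewrite (bigD1 b) //= lerDl sumr_ge0 // => a _.
  by case/andP: (hrng a w).
have hex : forall w, exists a, M a w = 1.
  move=> w; case: (pickP (fun a => M a w == 1)) => [a /eqP h|hall]; first by exists a.
  have : \sum_(a : option F) M a w = 0.
    apply: big1 => a _; case: (hint a w) => // h; by have := hall a; rewrite h eqxx.
  by rewrite hsum => /eqP; rewrite oner_eq0.
have huniq : forall w a b, M a w = 1 -> M b w = 1 -> a = b.
  move=> w a b ha hb; apply/eqP/negPn/negP => hne.
  have := hsum w; rewrite (bigD1 a) //= ha.
  have := sum_ge w (fun c => c != a) b; rewrite eq_sym hne => /(_ isT).
  rewrite hb => h1 h2.
  have : 1 + 1 <= (1 : R) by rewrite -{3}h2 lerD2l.
  move=> h3; lra.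
pose mu w := odflt None [pick a | M a w == 1].
have hmu : forall w a, mu w = a <-> M a w = 1.
  move=> w a; rewrite /mu; case: pickP => [b /eqP hb|hn] /=.
    split=> [<-|h] //; exact: huniq hb h.
  have [b hb] := hex w; by have := hn b; rewrite hb eqxx.
have hMf : forall f, M (Some f) = ind R (mu_of mu f).
  move=> f; apply/ffunP => w; rewrite !ffunE inE.
  case: (eqVneq (mu w) (Some f)) => [/hmu -> //|hne].
  case: (hint (Some f) w) => // /hmu h; by rewrite h eqxx in hne.
exists mu; split=> //; split.
- move=> w; rewrite /wpref; case: (eqVneq (mu w) None) => [->|hne]; rewrite ?eqxx ?orbT //.
  have [_ [_ tot]] := hpw w.
  case/orP: (tot _ _ hne) => [->//|/hnull h].
  by have := (proj1 (hmu w (mu w)) erefl); rewrite h => /eqP; rewrite eq_sym oner_eq0.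
- move=> f; have := hfix f; rewrite hMf (proj1 (@ch_spec F W pf f (hpf f) R _)).
  exact: ind_inj.
- move=> [f [S [hS hpr]]]; apply: hnob.
  have [irr [tr tot]] := hpf f.
  set T := mu_of mu f in hpr *.
  have [_ [hUsub hUbest]] := @ch_spec F W pf f (hpf f) R (S :|: T).
  set U := ch pf f (S :|: T) in hUsub hUbest *.
  exists f, (ind R U); split; [|split; [split|]].
  + by move=> w; rewrite ffunE; case: (w \in U); rewrite /= ?ler01 ?lexx.
  + rewrite /cwpref hMf vmax_ind (proj1 (@ch_spec F W pf f (hpf f) R _)).
    congr (ind R _); symmetry; apply: (@ch_uniq F W pf f (hpf f)) => //.
      by rewrite subsetUl.
    move=> T' hT' hne; apply: hUbest => //.
    apply: subset_trans hT' _; by rewrite subUset hUsub subsetUr.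
  + rewrite hMf => /ind_inj hUT.
    case: (eqVneq S U) => [hSU|hSU].
      by rewrite hSU hUT irr in hpr.
    have h := hUbest S (subsetUl _ _) hSU.
    by rewrite hUT in h; have := tr _ _ _ h hpr; rewrite irr.
  + move=> w; rewrite !ffunE.
    case hw: (w \in U); last by rewrite sumr_ge0 // => a _; case/andP: (hrng a w).
    rewrite -(proj1 (hmu w (mu w)) erefl); apply: sum_ge.
    have := subsetP hUsub w hw; rewrite inE => /orP [/hS //|].
    by rewrite /T inE => /eqP ->; rewrite /wpref eqxx orbT.
Qed.
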